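(* Let $f, g: A \to B$ be maps of $\mathbf{PR}$. If $\mathbf{PR}$ derives the equation $\mathrm{true}_A = \;\doteq_B \circ (f \times g)\circ \Delta_A : A \to \mathbb{N}$ (in free variables: $[f(a) \doteq_B g(a)] = \mathrm{true}_A$), then $\mathbf{PR}$ derives $f = g: A \to B$.
   Context: $\mathbf{PR}$ is the formal (syntactic) category defined as follows. Objects: generated from a terminal object $\mathbb{1}$ and a natural numbers object $\mathbb{N}$ by binary products $A \times B$. Maps: generated from the constants $0: \mathbb{1} \to \mathbb{N}$, $\mathrm{s}: \mathbb{N}\to\mathbb{N}$, identities, terminal maps $\Pi_A: A \to \mathbb{1}$, projections $\ell, \mathrm{r}$, by composition, induced maps $(f,g)$ and iteration $f \mapsto f^\S: A\times\mathbb{N}\to A$ of endomaps; map equality is the least congruence containing the category axioms, uniqueness of maps into $\mathbb{1}$, $\ell\circ(f,g)=f$, $\mathrm{r}\circ(f,g)=g$, $(\ell h,\mathrm{r} h)=h$, the iteration equations $f^\S(a,0)=a$, $f^\S(a,\mathrm{s}n)=f(f^\S(a,n))$, and Freyd's uniqueness rule for initialised iterates ($h(a,0)=f(a)$, $h(a,\mathrm{s}n)=g(h(a,n))$ imply $h = g^\S\circ(f\times\mathbb{N})$). $f\times g := (f\ell, g\mathrm{r})$, $\Delta_A := (\mathrm{id}_A,\mathrm{id}_A)$. Arithmetic on $\mathbb{N}$ (all defined in $\mathbf{PR}$ by iteration/primitive recursion): $\mathrm{true}=1=\mathrm{s}\circ 0$, $\mathrm{false}=0$, $\mathrm{true}_A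 = 1 \circ \Pi_A$; predecessor with $\mathrm{pred}(0)=0$, $\mathrm{pred}(\mathrm{s}n)=n$; truncated subtraction $a \dot- 0 = a$, $a \dot- \mathrm{s}n = \mathrm{pred}(a\dot- n)$; multiplication; $\neg 0 = 1$, $\neg \mathrm{s}n = 0$; $\mathrm{sign} = \neg\neg$; $x \wedge y = \mathrm{sign}(x\cdot y)$; $[m\le n] = \neg(m\dot- n)$; $[m \doteq n] = [m\le n]\wedge[n\le m]$. Equality predicates $\doteq_B: B\times B\to\mathbb{N}$ on other objects: $\doteq_{\mathbb{1}} = \mathrm{true}$, and componentwise on products: $[(a,b)\doteq_{A\times B}(a',b')] = [a\doteq_A a']\wedge[b\doteq_B b']$. *)

(* Defs.v *)
Inductive Obj : Type :=
| One : Obj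
| Nat : Obj
| Prod : Obj -> Obj -> Obj.

Inductive Map : Obj -> Obj -> Type :=
| mid   : forall A, Map A A
| mcomp : forall {A B C}, Map B C -> Map A B -> Map A C
| mbang : forall A, Map A One
| mzero : Map One Nat
| msucc : Map Nat Nat
| ml    : forall A B, Map (Prod A B) A
| mr    : forall A B, Map (Prod A B) B
| mpair : forall {C A B}, Map C A -> Map C B -> Map C (Prod A B)
| miter : forall {A}, Map A A -> Map (Prod A Nat) A.

Definition mtimes {A B C D} (f : Map A C) (g : Map B D) : Map (Prod A B) (Prod C D) :=
  mpair (mcomp f (ml A B)) (mcomp g (mr A B)).

Definition mdiag (A : Obj) : Map A (Prod A A) := mpair (mid A) (mid A).

(** "x(a,0)" : precomposition with (id_A, 0 o Pi_A) *)
Definition at0 (A : Obj) : Map A (Prod A Nat) := mpair (mid A) (mcomp mzero (mbang A)).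
(** "x(a, s n)" : precomposition with (l, s o r) *)
Definition atS (A : Obj) : Map (Prod A Nat) (Prod A Nat) :=
  mpair (ml A Nat) (mcomp msucc (mr A Nat)).

Inductive PREq : forall {A B : Obj}, Map A B -> Map A B -> Prop :=
| eq_refl  : forall A B (f : Map A B), PREq f f
| eq_sym   : forall A B (f g : Map A B), PREq f g -> PREq g f
| eq_trans : forall A B (f g h : Map A B), PREq f g -> PREq g h -> PREq f h
| eq_comp  : forall A B C (f f' : Map B C) (g g' : Map A B),
    PREq f f' -> PREq g g' -> PREq (mcomp f g) (mcomp f' g')
| eq_pair  : forall C A B (f f' : Map C A) (g g' : Map C B),
    PREq f f' -> PREq g g' -> PREq (mpair f g) (mpair f' g')
| eq_iter  : forall A (f f' : Map A A), PREq f f' -> PREq (miter f) (miter f')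
| eq_idl   : forall A B (f : Map A B), PREq (mcomp (mid B) f) f
| eq_idr   : forall A B (f : Map A B), PREq (mcomp f (mid A)) f
| eq_assoc : forall A B C D (f : Map C D) (g : Map B C) (h : Map A B),
    PREq (mcomp f (mcomp g h)) (mcomp (mcomp f g) h)
| eq_term  : forall A (f : Map A One), PREq f (mbang A)
| eq_projl : forall C A B (f : Map C A) (g : Map C B), PREq (mcomp (ml A B) (mpair f g)) f
| eq_projr : forall C A B (f : Map C A) (g : Map C B), PREq (mcomp (mr A B) (mpair f g)) g
| eq_surj  : forall C A B (h : Map C (Prod A B)),
    PREq (mpair (mcomp (ml A B) h) (mcomp (mr A B) h)) h
| eq_iter0 : forall A (f : Map A A), PREq (mcomp (miter f) (at0 A)) (mid A)
| eq_iterS : forall A (f : Map A A),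
    PREq (mcomp (miter f) (atS A)) (mcomp f (miter f))
| eq_freyd : forall A B (f : Map A B) (g : Map B B) (h : Map (Prod A Nat) B),
    PREq (mcomp h (at0 A)) f ->
    PREq (mcomp h (atS A)) (mcomp g h) ->
    PREq h (mcomp (miter g) (mtimes f (mid Nat))).

Definition one : Map One Nat := mcomp msucc mzero.
Definition mtrue : Map One Nat := one.
Definition mfalse : Map One Nat := mzero.
Definition true_ (A : Obj) : Map A Nat := mcomp mtrue (mbang A).

(** pred n = l (F^S((0,0), n)) with F(x,y) = (y, s y) *)
Definition pred_step : Map (Prod Nat Nat) (Prod Nat Nat) :=
  mpair (mr Nat Nat) (mcomp msucc (mr Nat Nat)).
Definition mpred : Map Nat Nat :=
  mcomp (ml Nat Nat)
    (mcomp (miter pred_step)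
       (mpair (mcomp (mpair mzero mzero) (mbang Nat)) (mid Nat))).

(** truncated subtraction: a -' 0 = a, a -' s n = pred (a -' n) *)
Definition msub : Map (Prod Nat Nat) Nat := miter mpred.

Definition madd : Map (Prod Nat Nat) Nat := miter msucc.

(** multiplication: x * n = r (F^S((x,0), n)) with F(x,acc) = (x, acc + x) *)
Definition mul_step : Map (Prod Nat Nat) (Prod Nat Nat) :=
  mpair (ml Nat Nat) (mcomp madd (mpair (mr Nat Nat) (ml Nat Nat))).
Definition mmul : Map (Prod Nat Nat) Nat :=
  mcomp (mr Nat Nat)
    (mcomp (miter mul_step)
       (mpair (mpair (ml Nat Nat) (mcomp mzero (mbang (Prod Nat Nat)))) (mr Nat Nat))).

(** negation: not 0 = 1, not (s n) = 0; via k(a,0)=a, k(a,s n)=0 *)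
Definition mnot : Map Nat Nat :=
  mcomp (miter (mcomp mzero (mbang Nat))) (mpair (mcomp one (mbang Nat)) (mid Nat)).
Definition msign : Map Nat Nat := mcomp mnot mnot.
Definition mand : Map (Prod Nat Nat) Nat := mcomp msign mmul.
Definition mleq : Map (Prod Nat Nat) Nat := mcomp mnot msub.
Definition mswap (A B : Obj) : Map (Prod A B) (Prod B A) := mpair (mr A B) (ml A B).
Definition meqN : Map (Prod Nat Nat) Nat :=
  mcomp mand (mpair mleq (mcomp mleq (mswap Nat Nat))).

Fixpoint meq (B : Obj) : Map (Prod B B) Nat :=
  match B as B0 return Map (Prod B0 B0) Nat with
  | One => true_ (Prod One One)
  | Nat => meqN
  | Prod A C =>
      mcomp mand
        (mpair
          (mcomp (meq A) (mpair (mcomp (ml A C) (ml (Prod A C) (Prod A C)))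
                                (mcomp (ml A C) (mr (Prod A C) (Prod A C)))))
          (mcomp (meq C) (mpair (mcomp (mr A C) (ml (Prod A C) (Prod A C)))
                                (mcomp (mr A C) (mr (Prod A C) (Prod A C))))))
  end.

(* Main.v *)
Require Import Defs.
From Stdlib Require Import Setoid Morphisms.

Infix "≈" := PREq (at level 70).
Notation "f ∘ g" := (mcomp f g) (at level 41, right associativity).

#[global] Instance PREq_equiv A B : Equivalence (@PREq A B).
Proof. split; [intro; apply eq_refl | intros ??; apply eq_sym | intros ???; apply eq_trans]. Qed.
#[global] Instance mcomp_proper A B C : Proper (PREq ==> PREq ==> PREq) (@mcomp A B C).
Proof. intros ?? H ?? H'; apply eq_comp; auto. Qed.
#[global] Instance mpair_proper C A B : Proper (PREq ==> PREq ==> PREq) (@mpair C A B).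
Proof. intros ?? H ?? H'; apply eq_pair; auto. Qed.
#[global] Instance miter_proper A : Proper (PREq ==> PREq) (@miter A).
Proof. intros ?? H; apply eq_iter; auto. Qed.

#[global] Instance mtimes_proper A B C D : Proper (PREq ==> PREq ==> PREq) (@mtimes A B C D).
Proof. intros ?? H ?? H'; unfold mtimes; rewrite H, H'; reflexivity. Qed.

Lemma cA A B C D (f : Map C D) (g : Map B C) (h : Map A B) : (f ∘ g) ∘ h ≈ f ∘ (g ∘ h).
Proof. symmetry; apply eq_assoc. Qed.
Lemma pl C A B (f : Map C A) (g : Map C B) : ml A B ∘ mpair f g ≈ f.
Proof. apply eq_projl. Qed.
Lemma pr C A B (f : Map C A) (g : Map C B) : mr A B ∘ mpair f g ≈ g.
Proof. apply eq_projr. Qed.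
Lemma idl A B (f : Map A B) : mid B ∘ f ≈ f. Proof. apply eq_idl. Qed.
Lemma idr A B (f : Map A B) : f ∘ mid A ≈ f. Proof. apply eq_idr. Qed.
Lemma cP D C A B (f : Map C A) (g : Map C B) (h : Map D C) :
  mpair f g ∘ h ≈ mpair (f ∘ h) (g ∘ h).
Proof.
  rewrite <- (eq_surj _ _ _ (mpair f g ∘ h)).
  rewrite <- !cA, pl, pr. reflexivity.
Qed.
Lemma bangc A B (h : Map A B) : mbang B ∘ h ≈ mbang A. Proof. apply eq_term. Qed.
Lemma surjpair C A B (h : Map C (Prod A B)) : mpair (ml A B ∘ h) (mr A B ∘ h) ≈ h.
Proof. apply eq_surj. Qed.
Lemma pair_lr A B : mpair (ml A B) (mr A B) ≈ mid (Prod A B).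
Proof. rewrite <- (surjpair _ _ _ (mid _)), !idr. reflexivity. Qed.

Lemma iter0g C A (f : Map A A) (t : Map C A) (e : Map C One) :
  miter f ∘ mpair t (mzero ∘ e) ≈ t.
Proof.
  transitivity (miter f ∘ at0 A ∘ t).
  - unfold at0. rewrite cP, idl, cA, (eq_term _ (mbang A ∘ t)), (eq_term _ e). reflexivity.
  - rewrite <- cA, eq_iter0, idl. reflexivity.
Qed.
Lemma iterSg C A (f : Map A A) (t : Map C A) (n : Map C Nat) :
  miter f ∘ mpair t (msucc ∘ n) ≈ f ∘ miter f ∘ mpair t n.
Proof.
  transitivity (miter f ∘ atS A ∘ mpair t n).
  - unfold atS. rewrite cP, pl, cA, pr. reflexivity.
  - rewrite <- cA, eq_iterS, cA. reflexivity.
Qed.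

Ltac norm := repeat progress (unfold mtimes, mdiag, at0, atS in *;
  rewrite ?cA, ?cP, ?pl, ?pr, ?idl, ?idr, ?bangc, ?iter0g, ?iterSg).
Ltac normin H := repeat progress (unfold mtimes, mdiag, at0, atS in H;
  rewrite ?cA, ?cP, ?pl, ?pr, ?idl, ?idr, ?bangc, ?iter0g, ?iterSg in H).

Lemma ind G B (h k : Map (Prod G Nat) B) (S : Map (Prod (Prod G Nat) B) B) :
  h ∘ at0 G ≈ k ∘ at0 G ->
  h ∘ atS G ≈ S ∘ mpair (mid _) h ->
  k ∘ atS G ≈ S ∘ mpair (mid _) k -> h ≈ k.
Proof.
  intros H0 Hh Hk.
  set (S' := mpair (atS G ∘ ml _ _) S).
  assert (E : forall x : Map (Prod G Nat) B, x ∘ atS G ≈ S ∘ mpair (mid _) x ->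
     mpair (mid _) x ≈ miter S' ∘ mtimes (mpair (mid _) x ∘ at0 G) (mid Nat)).
  { intros x Hx. apply eq_freyd.
    - reflexivity.
    - unfold S'. rewrite !cP, idl, cA, pl, idr, <- Hx. reflexivity. }
  rewrite <- (pr _ _ _ (mid _) h), <- (pr _ _ _ (mid _) k).
  rewrite (E h Hh), (E k Hk), !cP, H0. reflexivity.
Qed.

Lemma cases G B (h k : Map (Prod G Nat) B) :
  h ∘ at0 G ≈ k ∘ at0 G -> h ∘ atS G ≈ k ∘ atS G -> h ≈ k.
Proof.
  intros H0 HS. apply (ind _ _ h k ((h ∘ atS G) ∘ ml _ _)).
  - exact H0.
  - rewrite cA, pl, idr. reflexivity.
  - rewrite cA, pl, idr. symmetry; exact HS.
Qed.

Ltac inst H q := let H' := fresh "I" in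
  pose proof (eq_comp _ _ _ _ _ _ _ H (eq_refl _ _ q)) as H'; normin H'.

Lemma PS1 : mr Nat Nat ∘ miter pred_step ∘ mpair (mpair (mzero ∘ mbang (Prod One Nat)) (mzero ∘ mbang _)) (mr One Nat)
   ≈ mr One Nat.
Proof.
  apply (ind _ _ _ _ (msucc ∘ mr _ _)); norm; unfold pred_step; norm; reflexivity.
Qed.
Lemma PS C (t : Map C Nat) : mr Nat Nat ∘ miter pred_step ∘ mpair (mpair (mzero ∘ mbang C) (mzero ∘ mbang C)) t ≈ t.
Proof. inst PS1 (mpair (mbang C) t). exact I. Qed.

Lemma pred0 C : mpred ∘ mzero ∘ mbang C ≈ mzero ∘ mbang C.
Proof. unfold mpred. norm. reflexivity. Qed.
Lemma predS C (t : Map C Nat) : mpred ∘ msucc ∘ t ≈ t.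
Proof. unfold mpred. norm. unfold pred_step. norm. apply PS. Qed.

Lemma sub0 C (x : Map C Nat) : msub ∘ mpair x (mzero ∘ mbang C) ≈ x.
Proof. unfold msub. apply iter0g. Qed.
Lemma subS C (x n : Map C Nat) : msub ∘ mpair x (msucc ∘ n) ≈ mpred ∘ msub ∘ mpair x n.
Proof. unfold msub. apply iterSg. Qed.
Lemma add0 C (x : Map C Nat) : madd ∘ mpair x (mzero ∘ mbang C) ≈ x.
Proof. unfold madd. apply iter0g. Qed.
Lemma addS C (x n : Map C Nat) : madd ∘ mpair x (msucc ∘ n) ≈ msucc ∘ madd ∘ mpair x n.
Proof. unfold madd. apply iterSg. Qed.

Lemma ML1 : ml Nat Nat ∘ miter mul_step ∘ mpair (mpair (ml Nat Nat) (mzero ∘ mbang _)) (mr Nat Nat)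
   ≈ ml Nat Nat.
Proof.
  apply (ind _ _ _ _ (mr _ _)); norm; unfold mul_step; norm; reflexivity.
Qed.
Lemma ML C (x n : Map C Nat) : ml Nat Nat ∘ miter mul_step ∘ mpair (mpair x (mzero ∘ mbang C)) n ≈ x.
Proof. inst ML1 (mpair x n). exact I. Qed.

Lemma mul0 C (x : Map C Nat) : mmul ∘ mpair x (mzero ∘ mbang C) ≈ mzero ∘ mbang C.
Proof. unfold mmul. norm. reflexivity. Qed.
Lemma mulS C (x n : Map C Nat) : mmul ∘ mpair x (msucc ∘ n) ≈ madd ∘ mpair (mmul ∘ mpair x n) x.
Proof. unfold mmul. norm. unfold mul_step. norm. rewrite ML. reflexivity. Qed.

Lemma not0 C : mnot ∘ mzero ∘ mbang C ≈ msucc ∘ mzero ∘ mbang C.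
Proof. unfold mnot, one. norm. reflexivity. Qed.
Lemma notS C (t : Map C Nat) : mnot ∘ msucc ∘ t ≈ mzero ∘ mbang C.
Proof. unfold mnot, one. norm. reflexivity. Qed.

Lemma predS' : mpred ∘ msucc ≈ mid Nat.
Proof. rewrite <- (idr _ _ msucc), predS. reflexivity. Qed.
Lemma notS' : mnot ∘ msucc ≈ mzero ∘ mbang Nat.
Proof. rewrite <- (idr _ _ msucc), notS. reflexivity. Qed.

Ltac nrm := repeat progress (unfold mtimes, mdiag, at0, atS, msign, mand, mleq, meqN, mswap, true_, mtrue, one in *;
  rewrite ?cA, ?cP, ?pl, ?pr, ?idl, ?idr, ?bangc, ?pred0, ?predS, ?predS', ?sub0, ?subS, ?add0, ?addS,
     ?mul0, ?mulS, ?not0, ?notS, ?notS').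
Ltac nrmin H := repeat progress (unfold mtimes, mdiag, at0, atS, msign, mand, mleq, meqN, mswap, true_, mtrue, one in H;
  rewrite ?cA, ?cP, ?pl, ?pr, ?idl, ?idr, ?bangc, ?pred0, ?predS, ?predS', ?sub0, ?subS, ?add0, ?addS,
     ?mul0, ?mulS, ?not0, ?notS in H).
Ltac ins H q := let H' := fresh "I" in
  pose proof (eq_comp _ _ _ _ _ _ _ H (eq_refl _ _ q)) as H'; nrmin H'.

Lemma S1_ : msub ∘ mpair (msucc ∘ ml Nat Nat) (msucc ∘ mr Nat Nat) ≈ msub ∘ mpair (ml Nat Nat) (mr Nat Nat).
Proof. apply (ind _ _ _ _ (mpred ∘ mr _ _)); nrm; reflexivity. Qed.
Lemma S1 C (a b : Map C Nat) : msub ∘ mpair (msucc ∘ a) (msucc ∘ b) ≈ msub ∘ mpair a b.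
Proof. ins S1_ (mpair a b). nrm. nrm. exact I. Qed.

Ltac nrm2 := repeat progress (unfold mtimes, mdiag, at0, atS, msign, mand, mleq, meqN, mswap, true_, mtrue, one in *;
  rewrite ?cA, ?cP, ?pl, ?pr, ?idl, ?idr, ?bangc, ?pred0, ?predS, ?predS', ?S1, ?sub0, ?subS, ?add0, ?addS,
     ?mul0, ?mulS, ?not0, ?notS, ?notS').
Ltac nrm2in H := repeat progress (unfold mtimes, mdiag, at0, atS, msign, mand, mleq, meqN, mswap, true_, mtrue, one in H;
  rewrite ?cA, ?cP, ?pl, ?pr, ?idl, ?idr, ?bangc, ?pred0, ?predS, ?predS', ?S1, ?sub0, ?subS, ?add0, ?addS,
     ?mul0, ?mulS, ?not0, ?notS, ?notS' in H).


Lemma Z1_ : msub ∘ mpair (mzero ∘ mbang (Prod One Nat)) (mr One Nat) ≈ mzero ∘ mbang _.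
Proof. apply (ind _ _ _ _ (mpred ∘ mr _ _)); nrm; reflexivity. Qed.
Lemma Z1 C (y : Map C Nat) : msub ∘ mpair (mzero ∘ mbang C) y ≈ mzero ∘ mbang C.
Proof. ins Z1_ (mpair (mbang C) y). nrm. exact I. Qed.

Lemma D_ : msub ∘ mpair (mr One Nat) (mr One Nat) ≈ mzero ∘ mbang _.
Proof. apply (ind _ _ _ _ (mr _ _)); nrm2; reflexivity. Qed.
Lemma D C (y : Map C Nat) : msub ∘ mpair y y ≈ mzero ∘ mbang C.
Proof. ins D_ (mpair (mbang C) y). nrm. exact I. Qed.

Lemma Z2_ : madd ∘ mpair (mzero ∘ mbang (Prod One Nat)) (mr One Nat) ≈ mr One Nat.
Proof. apply (ind _ _ _ _ (msucc ∘ mr _ _)); nrm; reflexivity. Qed.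
Lemma Z2 C (y : Map C Nat) : madd ∘ mpair (mzero ∘ mbang C) y ≈ y.
Proof. ins Z2_ (mpair (mbang C) y). nrm. exact I. Qed.

Lemma M0_ : mmul ∘ mpair (mzero ∘ mbang (Prod One Nat)) (mr One Nat) ≈ mzero ∘ mbang _.
Proof. apply (ind _ _ _ _ (mr _ _)); nrm; reflexivity. Qed.
Lemma M0 C (y : Map C Nat) : mmul ∘ mpair (mzero ∘ mbang C) y ≈ mzero ∘ mbang C.
Proof. ins M0_ (mpair (mbang C) y). nrm. exact I. Qed.

Lemma M1_ : mmul ∘ mpair (msucc ∘ mzero ∘ mbang (Prod One Nat)) (mr One Nat) ≈ mr One Nat.
Proof. apply (ind _ _ _ _ (msucc ∘ mr _ _)); nrm; reflexivity. Qed.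
Lemma M1 C (y : Map C Nat) : mmul ∘ mpair (msucc ∘ mzero ∘ mbang C) y ≈ y.
Proof. ins M1_ (mpair (mbang C) y). nrm. exact I. Qed.

Lemma X1 C (x : Map C Nat) : mmul ∘ mpair x (msucc ∘ mzero ∘ mbang C) ≈ x.
Proof. nrm. rewrite Z2. reflexivity. Qed.

Definition rinit {G B} (z : Map G B) : Map G (Prod (Prod G Nat) B) :=
  mpair (mpair (mid G) (mzero ∘ mbang G)) z.
Definition rstep {G B} (S : Map (Prod (Prod G Nat) B) B) :=
  mpair (atS G ∘ ml (Prod G Nat) B) S.
Definition R0 {G B} (z : Map G B) S : Map (Prod G Nat) (Prod (Prod G Nat) B) :=
  miter (rstep S) ∘ mtimes (rinit z) (mid Nat).
Definition rec {G B} (z : Map G B) S : Map (Prod G Nat) B := mr _ _ ∘ R0 z S.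

Lemma R0l G B (z : Map G B) S : ml _ _ ∘ R0 z S ≈ mid _.
Proof.
  transitivity (miter (atS G) ∘ mtimes (at0 G) (mid Nat)).
  - apply eq_freyd; unfold R0, rinit, rstep; norm; reflexivity.
  - symmetry. apply eq_freyd; norm; reflexivity.
Qed.
Lemma R0g G B (z : Map G B) S C (c : Map C G) (t : Map C Nat) :
  R0 z S ∘ mpair c t ≈ mpair (mpair c t) (rec z S ∘ mpair c t).
Proof.
  rewrite <- (surjpair _ _ _ (R0 z S)) at 1. rewrite R0l. unfold rec. rewrite cP, idl, cA. reflexivity.
Qed.
Lemma rec0 G B (z : Map G B) S C (c : Map C G) (e : Map C One) :
  rec z S ∘ mpair c (mzero ∘ e) ≈ z ∘ c.
Proof. unfold rec, R0, rinit. norm. reflexivity. Qed.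
Lemma mtimes_pair A B C D E (f : Map A C) (g : Map B D) (a : Map E A) (b : Map E B) :
  mtimes f g ∘ mpair a b ≈ mpair (f ∘ a) (g ∘ b).
Proof. unfold mtimes. rewrite cP, !cA, pl, pr. reflexivity. Qed.
Lemma recS G B (z : Map G B) S C (c : Map C G) (t : Map C Nat) :
  rec z S ∘ mpair c (msucc ∘ t) ≈ S ∘ mpair (mpair c t) (rec z S ∘ mpair c t).
Proof.
  assert (H : R0 z S ∘ mpair c (msucc ∘ t) ≈ rstep S ∘ R0 z S ∘ mpair c t).
  { unfold R0. rewrite !cA, !mtimes_pair, !idl, iterSg. reflexivity. }
  transitivity (mr _ _ ∘ (R0 z S ∘ mpair c (msucc ∘ t))). { unfold rec. apply cA. }
  rewrite H. unfold rstep at 1. rewrite cP, pr, R0g. reflexivity.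
Qed.
#[global] Instance rec_proper G B : Proper (PREq ==> PREq ==> PREq) (@rec G B).
Proof. intros ?? H ?? H'. unfold rec, R0, rstep, rinit. rewrite H, H'. reflexivity. Qed.

Definition caseN {G B} (z : Map G B) (w : Map (Prod G Nat) B) := rec z (w ∘ ml _ _).
#[global] Instance caseN_proper G B : Proper (PREq ==> PREq ==> PREq) (@caseN G B).
Proof. intros ?? H ?? H'. unfold caseN. rewrite H, H'. reflexivity. Qed.
Lemma case0 G B (z : Map G B) w C (c : Map C G) (e : Map C One) :
  caseN z w ∘ mpair c (mzero ∘ e) ≈ z ∘ c.
Proof. apply rec0. Qed.
Lemma caseS G B (z : Map G B) w C (c : Map C G) (t : Map C Nat) :
  caseN z w ∘ mpair c (msucc ∘ t) ≈ w ∘ mpair c t.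
Proof. unfold caseN. rewrite recS, cA, pl. reflexivity. Qed.

Ltac nr := repeat progress (unfold mtimes, mdiag, at0, atS, msign, mand, mleq, meqN, mswap, true_, mtrue, one in *;
  rewrite ?cA, ?cP, ?pl, ?pr, ?idl, ?idr, ?bangc, ?pred0, ?predS, ?predS', ?S1, ?D, ?Z1, ?sub0, ?subS,
     ?Z2, ?add0, ?addS, ?M0, ?M1, ?mul0, ?mulS, ?not0, ?notS, ?notS', ?case0, ?caseS).
Ltac nrin H := repeat progress (unfold mtimes, mdiag, at0, atS, msign, mand, mleq, meqN, mswap, true_, mtrue, one in H;
  rewrite ?cA, ?cP, ?pl, ?pr, ?idl, ?idr, ?bangc, ?pred0, ?predS, ?predS', ?S1, ?D, ?Z1, ?sub0, ?subS,
     ?Z2, ?add0, ?addS, ?M0, ?M1, ?mul0, ?mulS, ?not0, ?notS, ?notS', ?case0, ?caseS in H).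
Ltac insr H q := let H' := fresh "I" in
  pose proof (eq_comp _ _ _ _ _ _ _ H (eq_refl _ _ q)) as H'; nrin H'.

Lemma NNN_ : mnot ∘ mnot ∘ mnot ∘ mr One Nat ≈ mnot ∘ mr One Nat.
Proof. apply cases; nr; reflexivity. Qed.
Lemma NNN C (t : Map C Nat) : mnot ∘ mnot ∘ mnot ∘ t ≈ mnot ∘ t.
Proof. insr NNN_ (mpair (mbang C) t). exact I. Qed.

Lemma IL_ : mmul ∘ mpair (mnot ∘ mnot ∘ mr Nat Nat) (mnot ∘ mnot ∘ mmul ∘ mpair (mnot ∘ mnot ∘ mr Nat Nat) (ml Nat Nat))
  ≈ mnot ∘ mnot ∘ mmul ∘ mpair (mnot ∘ mnot ∘ mr Nat Nat) (ml Nat Nat).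
Proof. apply cases; nr; reflexivity. Qed.
Lemma IL C (a z : Map C Nat) : mmul ∘ mpair (mnot ∘ mnot ∘ a) (mnot ∘ mnot ∘ mmul ∘ mpair (mnot ∘ mnot ∘ a) z)
  ≈ mnot ∘ mnot ∘ mmul ∘ mpair (mnot ∘ mnot ∘ a) z.
Proof. insr IL_ (mpair z a). exact I. Qed.

Lemma IR_ : mmul ∘ mpair (mnot ∘ mnot ∘ mr Nat Nat) (mnot ∘ mnot ∘ mmul ∘ mpair (ml Nat Nat) (mnot ∘ mnot ∘ mr Nat Nat))
  ≈ mnot ∘ mnot ∘ mmul ∘ mpair (ml Nat Nat) (mnot ∘ mnot ∘ mr Nat Nat).
Proof. apply cases; nr; reflexivity. Qed.
Lemma IR C (b z : Map C Nat) : mmul ∘ mpair (mnot ∘ mnot ∘ b) (mnot ∘ mnot ∘ mmul ∘ mpair z (mnot ∘ mnot ∘ b))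
  ≈ mnot ∘ mnot ∘ mmul ∘ mpair z (mnot ∘ mnot ∘ b).
Proof. insr IR_ (mpair z b). exact I. Qed.

Lemma DN_ : mmul ∘ mpair (mr One Nat) (mnot ∘ mr One Nat) ≈ mzero ∘ mbang _.
Proof. apply cases; nr; reflexivity. Qed.
Lemma DN C (d : Map C Nat) : mmul ∘ mpair d (mnot ∘ d) ≈ mzero ∘ mbang C.
Proof. insr DN_ (mpair (mbang C) d). exact I. Qed.

Lemma abs K B (L R : Map K B) (U : Map K Nat) (φL φR : Map (Prod K Nat) B) :
  L ≈ φL ∘ mpair (mid K) U -> R ≈ φR ∘ mpair (mid K) U -> φL ≈ φR -> L ≈ R.
Proof. intros H1 H2 H3. rewrite H1, H2, H3. reflexivity. Qed.

Local Notation KK := (Prod (Prod Nat Nat) Nat).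
Local Notation C3 B := (Prod KK B).
Local Notation C4 B := (Prod (C3 B) Nat).
Local Notation C5 B := (Prod (C4 B) Nat).
Local Notation C6 B := (Prod (C5 B) Nat).

Definition dZ3 {B} (F1 : Map (Prod Nat Nat) B) : Map (C5 B) B :=
  F1 ∘ mpair (msucc ∘ mr (C4 B) Nat) (mzero ∘ mbang (C5 B)).
Definition dW3 {B} (G : Map (Prod (Prod Nat Nat) B) B) : Map (C6 B) B :=
  G ∘ mpair (mpair (mr (C4 B) Nat ∘ ml (C5 B) Nat) (mr (C5 B) Nat))
            (mr KK B ∘ ml (C3 B) Nat ∘ ml (C4 B) Nat ∘ ml (C5 B) Nat).
Definition dW2 {B} F1 G : Map (C5 B) B :=
  caseN (dZ3 F1) (dW3 G) ∘ mpair (mid (C5 B))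
    (msub ∘ mpair (mr Nat Nat ∘ ml (Prod Nat Nat) Nat ∘ ml KK B ∘ ml (C3 B) Nat ∘ ml (C4 B) Nat)
                  (mr (C3 B) Nat ∘ ml (C4 B) Nat)).
Definition dZ2 {B} (F1 : Map (Prod Nat Nat) B) : Map (C4 B) B :=
  F1 ∘ mpair (mzero ∘ mbang (C4 B))
    (msub ∘ mpair (mr Nat Nat ∘ ml (Prod Nat Nat) Nat ∘ ml KK B ∘ ml (C3 B) Nat) (mr (C3 B) Nat)).
Definition dW {B} F1 G : Map (C4 B) B :=
  caseN (dZ2 F1) (dW2 F1 G) ∘ mpair (mid (C4 B))
    (msub ∘ mpair (ml Nat Nat ∘ ml (Prod Nat Nat) Nat ∘ ml KK B ∘ ml (C3 B) Nat) (mr (C3 B) Nat)).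
Definition dG {B} F1 G : Map (C3 B) B :=
  caseN (mr KK B) (dW F1 G) ∘ mpair (mid (C3 B))
    (msub ∘ mpair (mr Nat Nat ∘ ml (Prod Nat Nat) Nat ∘ ml KK B) (mr (Prod Nat Nat) Nat ∘ ml KK B)).
Definition dE {B} (F : Map (Prod Nat Nat) B) : Map KK B :=
  F ∘ mpair (msub ∘ mpair (ml Nat Nat ∘ ml (Prod Nat Nat) Nat)
                          (msub ∘ mpair (mr Nat Nat ∘ ml (Prod Nat Nat) Nat) (mr (Prod Nat Nat) Nat)))
            (msub ∘ mpair (mr Nat Nat ∘ ml (Prod Nat Nat) Nat)
                          (msub ∘ mpair (mr Nat Nat ∘ ml (Prod Nat Nat) Nat) (mr (Prod Nat Nat) Nat))).

Lemma DIstep B (F1 F : Map (Prod Nat Nat) B) (G : Map (Prod (Prod Nat Nat) B) B)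
  (HB1 : forall C (w : Map C Nat), F ∘ mpair (mzero ∘ mbang C) w ≈ F1 ∘ mpair (mzero ∘ mbang C) w)
  (HB2 : forall C (w : Map C Nat), F ∘ mpair w (mzero ∘ mbang C) ≈ F1 ∘ mpair w (mzero ∘ mbang C))
  (HS : forall C (a b : Map C Nat), F ∘ mpair (msucc ∘ a) (msucc ∘ b) ≈ G ∘ mpair (mpair a b) (F ∘ mpair a b)) :
  dE F ∘ atS _ ≈ dG F1 G ∘ mpair (mid _) (dE F).
Proof.
  unfold dE, dG.
  apply (abs _ _ _ _ (msub ∘ mpair (mr Nat Nat ∘ ml (Prod Nat Nat) Nat) (mr (Prod Nat Nat) Nat))
    (F ∘ mpair (msub ∘ mpair (ml _ _ ∘ ml _ _ ∘ ml _ _) (mpred ∘ mr _ _))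
               (msub ∘ mpair (mr _ _ ∘ ml _ _ ∘ ml _ _) (mpred ∘ mr _ _)))
    (caseN (mr KK B) (dW F1 G) ∘ mpair (mpair (ml _ _)
        (F ∘ mpair (msub ∘ mpair (ml _ _ ∘ ml _ _ ∘ ml _ _) (mr _ _))
                   (msub ∘ mpair (mr _ _ ∘ ml _ _ ∘ ml _ _) (mr _ _)))) (mr _ _))).
  - nr. reflexivity.
  - nr. reflexivity.
  - apply cases.
    + nr. reflexivity.
    + nr. unfold dW. nr.
      set (y2 := mr Nat Nat ∘ ml (Prod Nat Nat) Nat ∘ ml KK Nat ∘ ml (Prod KK Nat) Nat).
      set (t2 := mr KK Nat ∘ ml (Prod KK Nat) Nat).
      apply (abs _ _ _ _ (msub ∘ mpair (ml Nat Nat ∘ ml (Prod Nat Nat) Nat ∘ ml KK Nat) (mr KK Nat))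
        (F ∘ mpair (mr _ _) (msub ∘ mpair y2 t2))
        (caseN (dZ2 F1) (dW2 F1 G) ∘ mpair (mpair (mpair (ml KK Nat ∘ ml (Prod KK Nat) Nat)
            (F ∘ mpair (mpred ∘ mr _ _) (mpred ∘ msub ∘ mpair y2 t2))) t2) (mr _ _))); unfold y2, t2.
      * nr. reflexivity.
      * nr. reflexivity.
      * apply cases.
        -- nr. unfold dZ2. nr. rewrite HB1. reflexivity.
        -- nr. unfold dW2. nr.
           set (a3 := mr (C3 Nat) Nat ∘ ml (C4 Nat) Nat).
           set (b3 := mr (C4 Nat) Nat).
           apply (abs _ _ _ _ (msub ∘ mpair (mr Nat Nat ∘ ml (Prod Nat Nat) Nat ∘ ml KK Nat ∘ ml (C3 Nat) Nat)
                                           (mr KK Nat ∘ ml (C3 Nat) Nat))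
             (F ∘ mpair (msucc ∘ a3) b3)
             (caseN (dZ3 F1) (dW3 G) ∘ mpair (mpair (mpair (mpair (ml KK Nat ∘ ml (C3 Nat) Nat ∘ ml (C4 Nat) Nat)
                  (F ∘ mpair a3 (mpred ∘ b3))) (mr KK Nat ∘ ml (C3 Nat) Nat ∘ ml (C4 Nat) Nat)) a3) b3));
             unfold a3, b3.
           ++ nr. reflexivity.
           ++ nr. reflexivity.
           ++ apply cases.
              ** nr. unfold dZ3. nr. rewrite HB2. reflexivity.
              ** nr. unfold dW3. nr. rewrite HS. reflexivity.
Qed.

Lemma DI B (F1 F2 : Map (Prod Nat Nat) B) (G : Map (Prod (Prod Nat Nat) B) B)
 (HB1 : F1 ∘ mpair (mzero ∘ mbang Nat) (mid Nat) ≈ F2 ∘ mpair (mzero ∘ mbang Nat) (mid Nat))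
 (HB2 : F1 ∘ mpair (mid Nat) (mzero ∘ mbang Nat) ≈ F2 ∘ mpair (mid Nat) (mzero ∘ mbang Nat))
 (HS1 : F1 ∘ mpair (msucc ∘ ml Nat Nat) (msucc ∘ mr Nat Nat) ≈ G ∘ mpair (mid _) F1)
 (HS2 : F2 ∘ mpair (msucc ∘ ml Nat Nat) (msucc ∘ mr Nat Nat) ≈ G ∘ mpair (mid _) F2) : F1 ≈ F2.
Proof.
  assert (B1 : forall C (w : Map C Nat), F2 ∘ mpair (mzero ∘ mbang C) w ≈ F1 ∘ mpair (mzero ∘ mbang C) w).
  { intros C w. insr HB1 w. symmetry. exact I. }
  assert (B2 : forall C (w : Map C Nat), F2 ∘ mpair w (mzero ∘ mbang C) ≈ F1 ∘ mpair w (mzero ∘ mbang C)).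
  { intros C w. insr HB2 w. symmetry. exact I. }
  assert (S1g : forall C (a b : Map C Nat), F1 ∘ mpair (msucc ∘ a) (msucc ∘ b) ≈ G ∘ mpair (mpair a b) (F1 ∘ mpair a b)).
  { intros C a b. insr HS1 (mpair a b). exact I. }
  assert (S2g : forall C (a b : Map C Nat), F2 ∘ mpair (msucc ∘ a) (msucc ∘ b) ≈ G ∘ mpair (mpair a b) (F2 ∘ mpair a b)).
  { intros C a b. insr HS2 (mpair a b). exact I. }
  assert (E : dE F1 ≈ dE F2).
  { apply (ind _ _ _ _ (dG F1 G)).
    - unfold dE. nr. rewrite B2. reflexivity.
    - apply DIstep; intros; try reflexivity. apply S1g.
    - apply DIstep; intros; auto. }
  transitivity (dE F1 ∘ mpair (mid _) (mr Nat Nat)).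
  { unfold dE. nr. rewrite pair_lr, idr. reflexivity. }
  rewrite E. unfold dE. nr. rewrite pair_lr, idr. reflexivity.
Qed.

Lemma Max_ : madd ∘ mpair (msub ∘ mpair (ml Nat Nat) (mr Nat Nat)) (mr Nat Nat)
           ≈ madd ∘ mpair (msub ∘ mpair (mr Nat Nat) (ml Nat Nat)) (ml Nat Nat).
Proof. apply (DI _ _ _ (msucc ∘ mr _ _)); nr; reflexivity. Qed.
Lemma Max C (x y : Map C Nat) : madd ∘ mpair (msub ∘ mpair x y) y ≈ madd ∘ mpair (msub ∘ mpair y x) x.
Proof. insr Max_ (mpair x y). exact I. Qed.

Lemma natEq C (u v : Map C Nat) : msub ∘ mpair u v ≈ mzero ∘ mbang C -> msub ∘ mpair v u ≈ mzero ∘ mbang C -> u ≈ v.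
Proof.
  intros H1 H2. pose proof (Max C u v) as M. rewrite H1, H2, !Z2 in M. symmetry. exact M.
Qed.

Lemma and_split C (a b : Map C Nat) :
  mnot ∘ mnot ∘ mmul ∘ mpair (mnot ∘ mnot ∘ a) (mnot ∘ mnot ∘ b) ≈ msucc ∘ mzero ∘ mbang C ->
  mnot ∘ mnot ∘ a ≈ msucc ∘ mzero ∘ mbang C /\ mnot ∘ mnot ∘ b ≈ msucc ∘ mzero ∘ mbang C.
Proof.
  intros H. split.
  - pose proof (IL C a (mnot ∘ mnot ∘ b)) as L. rewrite H, X1 in L. exact L.
  - pose proof (IR C b (mnot ∘ mnot ∘ a)) as L. rewrite H, X1 in L. exact L.
Qed.

Lemma boolmeq X C (h : Map C (Prod X X)) : meq X ∘ h ≈ mnot ∘ mnot ∘ meq X ∘ h.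
Proof.
  destruct X; cbn [meq]; nr; try reflexivity.
  - rewrite (NNN _ (mnot ∘ _)). reflexivity.
  - rewrite (NNN _ (mnot ∘ _)). reflexivity.
Qed.

Lemma mainL X : forall C (u v : Map C X), meq X ∘ mpair u v ≈ msucc ∘ mzero ∘ mbang C -> u ≈ v.
Proof.
  induction X as [| |X IHX Y IHY]; intros C u v H.
  - rewrite (eq_term _ u), (eq_term _ v). reflexivity.
  - cbn [meq] in H. nrin H.
    rewrite <- (NNN _ (msub ∘ mpair u v)), <- (NNN _ (msub ∘ mpair v u)) in H.
    apply and_split in H. destruct H as [H1 H2].
    rewrite NNN in H1, H2.
    pose proof (DN C (msub ∘ mpair u v)) as D1. pose proof (DN C (msub ∘ mpair v u)) as D2.
    rewrite H1, X1 in D1. rewrite H2, X1 in D2.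
    apply natEq; assumption.
  - cbn [meq] in H. nrin H.
    rewrite (boolmeq X), (boolmeq Y) in H.
    apply and_split in H. destruct H as [H1 H2].
    rewrite <- (boolmeq X) in H1. rewrite <- (boolmeq Y) in H2.
    apply IHX in H1. apply IHY in H2.
    rewrite <- (surjpair _ _ _ u), <- (surjpair _ _ _ v), H1, H2. reflexivity.
Qed.

Theorem mainTheorem2 (A B : Obj) (f g : Map A B) :
  PREq (true_ A) (mcomp (meq B) (mcomp (mtimes f g) (mdiag A))) ->
  PREq f g.
Proof.
  intros H. apply (mainL B A). nrin H. symmetry. exact H.
Qed.
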